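(* Let $S$ be an independent set of $M$ and $F=\mathrm{cl}(S)$. If $G$ is a hyperplane of $M^\perp$ with $F\cup G\neq E$, then $F\cup G\cup P(S)\neq E$.
   Context: Let $M$ be a matroid with no loops and no coloops on the ground set $E=\{0,1,\dots,n\}$, totally ordered by the usual order of integers; $M^\perp$ its dual, $\mathrm{cl}$ the closure operator of $M$. For an independent set $S$ of $M$, $P(S)=\{e\in E-S:\ \text{there is a cocircuit } C^\perp \text{ of } M \text{ with } C^\perp\subseteq E-S \text{ and } e=\min C^\perp\}$; it is known that $S\sqcup P(S)$ is the lexicographically smallest basis of $M$ containing $S$. *)

(* Defs.v *)
From mathcomp Require Import all_boot.
Set Implicit Arguments. Unset Strict Implicit. Unset Printing Implicit Defensive.

(* A matroid on a finite ground set T (ground set = all of T). *)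
Record matroid (T : finType) := Matroid {
  indep : {set T} -> bool;
  indep0 : indep set0;
  indep_sub : forall A B : {set T}, A \subset B -> indep B -> indep A;
  indep_aug : forall A B : {set T}, indep A -> indep B -> #|A| < #|B| ->
                exists2 x, x \in B :\: A & indep (x |: A)
}.

Section Generic.
Variable T : finType.

Definition rank_of (ind : {set T} -> bool) (A : {set T}) : nat :=
  \max_(B : {set T} | (B \subset A) && ind B) #|B|.

Definition closure_of (ind : {set T} -> bool) (A : {set T}) : {set T} :=
  [set x | rank_of ind (x |: A) == rank_of ind A].

Definition hyperplane_of (ind : {set T} -> bool) (H : {set T}) : bool :=
  (closure_of ind H == H) && ((rank_of ind H).+1 == rank_of ind setT).

Variable M : matroid T.

Definition basis (B : {set T}) : bool :=
  indep M B && [forall x, (x \notin B) ==> ~~ indep M (x |: B)].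

(* independent sets of the dual matroid M^perp: sets disjoint from some basis *)
Definition coindep (I : {set T}) : bool :=
  [exists B : {set T}, basis B && [disjoint I & B]].

Definition cl (A : {set T}) : {set T} := closure_of (indep M) A.

Definition dual_hyperplane (H : {set T}) : bool := hyperplane_of coindep H.

Definition cocircuit (C : {set T}) : bool :=
  ~~ coindep C && [forall x in C, coindep (C :\ x)].

Definition loopless : Prop := forall x : T, indep M [set x].
Definition coloopless : Prop := forall x : T, exists2 B, basis B & x \notin B.

End Generic.

(* Ground set E = {0,...,n} = 'I_n.+1 with its usual order. *)
Definition Pset (n : nat) (M : matroid 'I_n.+1) (S : {set 'I_n.+1}) : {set 'I_n.+1} :=
  [set e | (e \notin S) &&
     [exists C : {set 'I_n.+1},
        [&& cocircuit M C, C \subset ~: S, e \in C & [forall y in C, (e <= y)%N]]]].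

(* Main.v *)
Require Import Defs.
From mathcomp Require Import all_boot.
Set Implicit Arguments. Unset Strict Implicit. Unset Printing Implicit Defensive.

Section R.
Variable T : finType.
Implicit Types (ind : {set T} -> bool) (A B : {set T}).

Lemma rank_ge ind A B : B \subset A -> ind B -> #|B| <= rank_of ind A.
Proof. by move=> sBA iB; apply: (@leq_bigmax_cond _ _ (fun B => #|B|) B); rewrite sBA iB. Qed.

Lemma rank_le ind A : rank_of ind A <= #|A|.
Proof. by apply/bigmax_leqP => B /andP[s _]; exact: subset_leq_card. Qed.

Lemma rank_mono ind A A' : A \subset A' -> rank_of ind A <= rank_of ind A'.
Proof.
move=> sA; apply/bigmax_leqP => B /andP[s i]; apply: rank_ge => //.
exact: subset_trans s sA.
Qed.

Lemma rank_wit ind A : ind set0 -> exists2 B : {set T}, (B \subset A) && ind B & rank_of ind A = #|B|.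
Proof.
move=> i0.
case: (@arg_maxnP _ set0 (fun B => (B \subset A) && ind B) (fun B => #|B|)).
  by rewrite sub0set.
move=> B HB Hmax; exists B => //; apply/eqP; rewrite eqn_leq; apply/andP; split.
  by apply/bigmax_leqP => C HC; apply: Hmax.
by case/andP: HB => s i; apply: rank_ge.
Qed.
Lemma disjointP (A B : {set T}) :
  reflect (forall x, x \in A -> x \in B -> False) [disjoint A & B].
Proof.
rewrite disjoints_subset; apply: (iffP subsetP) => H x xA.
  by move=> xB; have := H x xA; rewrite inE xB.
by rewrite inE; apply/negP => xB; exact: H x xA xB.
Qed.
End R.

Section M.
Variable T : finType.
Variable M : matroid T.
Implicit Types (A B J : {set T}).

Lemma ext_basis A : indep M A -> exists2 B : {set T}, basis M B & A \subset B.
Proof.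
move=> iA.
case: (@arg_maxnP _ A (fun B => indep M B && (A \subset B)) (fun B => #|B|)).
  by rewrite iA subxx.
move=> B /andP[iB sAB] Hmax; exists B => //.
apply/andP; split => //; apply/forallP => x; apply/implyP => xB; apply/negP => ix.
have := Hmax (x |: B); rewrite ix (subset_trans sAB (subsetUr _ _)) .
move=> /(_ isT); rewrite cardsU1 xB. by rewrite /geq /= ltnn.
Qed.

Lemma basis_card B B' : basis M B -> basis M B' -> #|B'| <= #|B|.
Proof.
move=> /andP[iB /forallP bB] /andP[iB' _]; rewrite leqNgt; apply/negP => lt.
have [x /setDP[_ xB] ix] := indep_aug iB iB' lt.
by have := bB x; rewrite xB ix.
Qed.

Lemma big_basis B X : basis M B -> indep M X -> #|B| <= #|X| -> basis M X.
Proof.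
move=> bB iX le; apply/andP; split => //; apply/forallP => x; apply/implyP => xX.
apply/negP => ix.
case/andP: bB => iB /forallP bB.
have lt : #|B| < #|x |: X| by rewrite cardsU1 xX add1n ltnS.
have [y /setDP[_ yB] iy] := indep_aug iB ix lt.
by have := bB y; rewrite yB iy.
Qed.

Lemma exchange B e J : basis M B -> e \in B -> indep M J -> e \notin J ->
  ~~ indep M (e |: J) -> exists2 B' : {set T}, basis M B' & B' \subset (B :\ e) :|: J.
Proof.
move=> bB eB iJ eJ dJ.
set U := (B :\ e) :|: J.
case: (@arg_maxnP _ J (fun X => [&& indep M X, J \subset X & X \subset U]) (fun X => #|X|)).
  by rewrite iJ subxx subsetUr.
move=> X /and3P[iX sJX sXU] Hmax; exists X => //.
apply: (big_basis bB iX); rewrite leqNgt; apply/negP => lt.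
have [x /setDP[xB xX] ix] := indep_aug iX (proj1 (andP bB)) lt.
case: (eqVneq x e) => [xe|xne].
  subst x; move/negP: dJ; apply; apply: indep_sub ix; exact: setUS.
have := Hmax (x |: X); rewrite ix (subset_trans sJX (subsetUr _ _)).
rewrite subUset sub1set sXU !inE xne xB /= .
move=> /(_ isT); rewrite cardsU1 xX. by rewrite /geq /= ltnn.
Qed.

Lemma orth C x J : cocircuit M C -> x \in C -> indep M J -> x \notin J ->
  ~~ indep M (x |: J) -> [disjoint J & C] -> False.
Proof.
move=> /andP[nC /forallP cC] xC iJ xJ dJ dis.
have := cC x; rewrite xC /= => /existsP[B /andP[bB dB]].
have xB : x \in B.
  apply/negPn/negP => xB; move/negP: nC; apply; apply/existsP; exists B.
  rewrite bB /=; apply/disjointP => y yC yB.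
  case: (eqVneq y x) => [yx|yx]; first by subst y; rewrite yB in xB.
  by move/disjointP: dB => /(_ y); rewrite !inE yx yC yB => /(_ isT isT).
have [B' bB' sB'] := exchange bB xB iJ xJ dJ.
move/negP: nC; apply; apply/existsP; exists B'; rewrite bB' /=.
apply/disjointP => y yC yB'.
have := subsetP sB' y yB'; rewrite !inE => /orP[/andP[yx yB]|yJ].
  by move/disjointP: dB => /(_ y); rewrite !inE yx yC yB => /(_ isT isT).
by move/disjointP: dis => /(_ y yJ yC).
Qed.
End M.

Section D.
Variable T : finType.
Variable M : matroid T.

Lemma coindep0 : coindep M set0.
Proof.
have [B bB _] := ext_basis (indep0 M); apply/existsP; exists B; rewrite bB /=.
by apply/disjointP => y; rewrite inE.
Qed.

Lemma coindepC B : basis M B -> coindep M (~: B).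
Proof. by move=> bB; apply/existsP; exists B; rewrite bB /= disjoints_subset subxx. Qed.

Lemma dual_circ G : dual_hyperplane M G ->
  (forall x, x \notin G -> indep M (~: G :\ x)) /\ ~~ indep M (~: G).
Proof.
move=> /andP[/eqP clG /eqP rG]; split.
  move=> x xG.
  have ne : rank_of (coindep M) (x |: G) != rank_of (coindep M) G.
    by move: xG; rewrite -{1}clG inE.
  have m1 := rank_mono (coindep M) (subsetUr [set x] G).
  have m2 := rank_mono (coindep M) (subsetT (x |: G)).
  have eqr : rank_of (coindep M) (x |: G) = rank_of (coindep M) setT.
    apply/eqP; rewrite eqn_leq m2 /= -rG ltn_neqAle eq_sym ne m1 //.
  have [K /andP[sK cK] rK] := rank_wit (x |: G) coindep0.
  case/existsP: cK => B /andP[bB dKB].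
  have KB : K = ~: B.
    apply/eqP; rewrite eqEcard -disjoints_subset dKB /= -rK eqr.
    exact: rank_ge (subsetT _) (coindepC bB).
  case/andP: (bB) => iB _; apply: indep_sub iB; apply/subsetP => y.
  rewrite !inE => /andP[yx yG]; apply/negPn/negP => yB.
  have : y \in K by rewrite KB inE.
  by move/(subsetP sK); rewrite !inE (negbTE yx) (negbTE yG).
apply/negP => iD.
have [B bB sB] := ext_basis iD.
have r1 : #|~: B| <= rank_of (coindep M) G.
  apply: rank_ge (coindepC bB); by rewrite -(setCK G) setCS.
have [K /andP[_ cK] rK] := rank_wit setT coindep0.
case/existsP: cK => B' /andP[bB' dKB'].
have k1 : #|K| <= #|~: B'| by apply: subset_leq_card; rewrite -disjoints_subset.
have e1 : #|B| = #|B'| by apply/eqP; rewrite eqn_leq (basis_card bB bB') (basis_card bB' bB).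
have e2 : #|~: B| = #|~: B'|.
  by apply/eqP; rewrite -(eqn_add2l #|B|) cardsC {1}e1 cardsC.
move: rG; rewrite rK => rG.
by move: (leq_trans k1 (leq_trans (eq_leq (esym e2)) r1)); rewrite -rG ltnn.
Qed.
End D.

Lemma cl_dep (T : finType) (M : matroid T) S y :
  indep M S -> y \in cl M S -> y \notin S -> ~~ indep M (y |: S).
Proof.
move=> iS; rewrite inE => /eqP e yS; apply/negP => iy.
have r1 : rank_of (indep M) S <= #|S| := rank_le _ _.
have r2 := rank_ge (subxx (y |: S)) iy.
move: r2; rewrite e cardsU1 yS => r2.
by move: (leq_trans r2 r1); rewrite /= ltnn.
Qed.

Theorem mainTheorem16 (n : nat) (M : matroid 'I_n.+1)
  (Hloop : loopless M) (Hcoloop : coloopless M)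
  (S G : {set 'I_n.+1}) :
  indep M S -> dual_hyperplane M G ->
  cl M S :|: G != setT ->
  cl M S :|: G :|: Pset M S != setT.
Proof.
move=> iS hG HFG; apply/negP => /eqP Hall.
have inall y : y \in cl M S :|: G :|: Pset M S by rewrite Hall inE.
have : ~~ [forall x, x \in cl M S :|: G].
  by apply: contra HFG => /forallP H; apply/eqP/setP => x; rewrite in_setT H.
case/forallPn => x0; rewrite !inE negb_or => /andP[x0F x0G].
have x0P : x0 \in Pset M S.
  by have := inall x0; rewrite !inE (negbTE x0F) (negbTE x0G).
case: (@arg_maxnP _ x0 (fun e => (e \notin G) && (e \in Pset M S)) (fun e => nat_of_ord e)).
  by rewrite x0G x0P.
move=> e /andP[eG eP] Hmax.
move: (eP); rewrite inE => /andP[eS /existsP[C /and4P[cC sCS eC /forallP minC]]].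
have [Hind Hdep] := dual_circ hG.
apply: (orth cC eC (Hind e eG)); first by rewrite !inE eqxx.
  by rewrite setD1K // inE.
apply/disjointP => y; rewrite !inE => /andP[ye yG] yC.
have yS : y \notin S by have := subsetP sCS y yC; rewrite inE.
have := inall y; rewrite !inE (negbTE yG) orbF => /orP[yF|yP].
  have yF' : y \in cl M S by rewrite /cl /closure_of inE.
  by apply: (orth cC yC iS yS (cl_dep iS yF' yS)); rewrite disjoint_sym disjoints_subset.
have yP' : y \in Pset M S by rewrite /Pset inE.
have := Hmax y; rewrite yG yP' => /(_ isT) ley.
have := minC y; rewrite yC /= => eley.
by move/eqP: ye; apply; apply/val_inj/eqP; rewrite eqn_leq eley andbT; exact: ley.
Qed.
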